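(* Let $R=\mathbb{C}[x_1,x_2,x_3]$ graded by $\deg x_m=2$. For a composition $(a_1,\ldots,a_k)$ of $3$ let $R_{a_1\cdots a_k}$ denote the subring of polynomials invariant under $S_{a_1}\times\cdots\times S_{a_k}$ (each factor permuting the corresponding consecutive block of variables); thus $R_{111}=R$, $R_{21}$ consists of the polynomials symmetric in $x_1,x_2$, $R_{12}$ of those symmetric in $x_2,x_3$, and $R_3$ of the symmetric polynomials. Consider the graded $R_{21}$-$R_{21}$-bimodule $$M=R_{111}\otimes_{R_{12}}R_{111}\otimes_{R_{21}}R_{21},$$ where the left action is the restriction to $R_{21}\subset R_{111}$ of the left $R_{111}$-action. Then there is an isomorphism of graded $R_{21}$-$R_{21}$-bimodules $$M\;\cong\;\big(R_{21}\otimes_{R_3}R_{21}\big)\;\oplus\;R_{21}\{2\}.$$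
   Context: For a graded bimodule $N$, $N\{k\}$ denotes $N$ with its grading shifted upward by $k$. *)

(* Defs.v *)
From HB Require Import structures.
From mathcomp Require Import all_boot all_order all_algebra all_fingroup.
From mathcomp Require Import mpoly complex reals.

Set Implicit Arguments.
Unset Strict Implicit.
Unset Printing Implicit Defensive.

Import Order.TTheory GRing.Theory Num.Theory.
Local Open Scope ring_scope.

(*  - The complex numbers are  C := R[i]  (= complex R) for a realType R.     *)
(*  - P R := {mpoly C[3]} = C[x_1,x_2,x_3]; variable x_m is 'X_(m-1).         *)
(*  - The grading is deg x_m = 2, i.e. the grading degree of a polynomial    *)
(*    homogeneous of total degree e is 2e.  Gradings are indexed by nat     *)
(*    (all modules involved are nonnegatively graded).                       *)
(*  - Tensor products  A (x)_S B (x)_S' D  of modules over commutative       *)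
(*    C-algebras are presented concretely: an element is a finite formal     *)
(*    sum of pure tensors (a list of triples/pairs of elements of the        *)
(*    respective rings), and two formal sums represent the same element of   *)
(*    the tensor product iff every S-balanced multilinear map into every     *)
(*    C-vector space takes the same value on them (universal property).      *)
(*    Maps out of a tensor product are given on representatives and must     *)
(*    respect this equivalence.                                              *)

Section Defs.
Variable R : realType.

Definition P := {mpoly R[i][3]}.

Definition i0 : 'I_3 := @Ordinal 3 0 isT.
Definition i1 : 'I_3 := @Ordinal 3 1 isT.
Definition i2 : 'I_3 := @Ordinal 3 2 isT.

Definition R111 : pred P := predT.
Definition R21 : pred P := fun p => msym (tperm i0 i1) p == p.
Definition R12 : pred P := fun p => msym (tperm i1 i2) p == p.
Definition R3 : pred P := fun p => p \is symmetric.

(* Graded pieces: p lies in degree d of the module (ring){k}, where the     *)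
(* ring is graded by deg x_m = 2 and {k} shifts the grading up by k.         *)
Definition homdeg (k d : nat) (p : P) : Prop :=
  p = 0 \/ exists e : nat, d = (2 * e + k)%N /\ p \is e.-homog.

Definition balanced2 (S A B : pred P) (V : lmodType R[i]) (beta : P -> P -> V)
  : Prop :=
  [/\ (forall a a' b, A a -> A a' -> B b -> beta (a + a') b = beta a b + beta a' b),
      (forall a b b', A a -> B b -> B b' -> beta a (b + b') = beta a b + beta a b'),
      (forall (c : R[i]) a b, A a -> B b -> beta (c *: a) b = c *: beta a b),
      (forall (c : R[i]) a b, A a -> B b -> beta a (c *: b) = c *: beta a b)
    & (forall s a b, S s -> A a -> B b -> beta (a * s) b = beta a (s * b))].

Definition valid2 (A B : pred P) (x : seq (P * P)) : Prop :=
  forall t, t \in x -> A t.1 /\ B t.2.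

Definition teq2 (S A B : pred P) (x y : seq (P * P)) : Prop :=
  forall (V : lmodType R[i]) (beta : P -> P -> V), balanced2 S A B beta ->
    \sum_(t <- x) beta t.1 t.2 = \sum_(t <- y) beta t.1 t.2.

Definition balanced3 (S1 S2 A B D : pred P) (V : lmodType R[i])
  (beta : P -> P -> P -> V) : Prop :=
  [/\ (forall a a' b d, A a -> A a' -> B b -> D d ->
          beta (a + a') b d = beta a b d + beta a' b d),
      (forall a b b' d, A a -> B b -> B b' -> D d ->
          beta a (b + b') d = beta a b d + beta a b' d),
      (forall a b d d', A a -> B b -> D d -> D d' ->
          beta a b (d + d') = beta a b d + beta a b d'),
      (forall (c : R[i]) a b d, A a -> B b -> D d ->
          beta (c *: a) b d = c *: beta a b d /\
          beta a (c *: b) d = c *: beta a b d /\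
          beta a b (c *: d) = c *: beta a b d)
    & (forall s a b d, S1 s -> A a -> B b -> D d ->
          beta (a * s) b d = beta a (s * b) d) /\
      (forall s a b d, S2 s -> A a -> B b -> D d ->
          beta a (b * s) d = beta a b (s * d))].

Definition valid3 (A B D : pred P) (x : seq (P * P * P)) : Prop :=
  forall t, t \in x -> [/\ A t.1.1, B t.1.2 & D t.2].

Definition teq3 (S1 S2 A B D : pred P) (x y : seq (P * P * P)) : Prop :=
  forall (V : lmodType R[i]) (beta : P -> P -> P -> V),
    balanced3 S1 S2 A B D beta ->
    \sum_(t <- x) beta t.1.1 t.1.2 t.2 = \sum_(t <- y) beta t.1.1 t.1.2 t.2.

(* The bimodule  M = R_111 (x)_{R_12} R_111 (x)_{R_21} R_21, as a graded    *)
(* R_21-R_21-bimodule (left action: multiplication on the first factor,     *)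
(* restricted to R_21; right action: multiplication on the last factor).    *)
Definition Mel := seq (P * P * P).
Definition Mvalid (x : Mel) := valid3 R111 R111 R21 x.
Definition Meq (x y : Mel) := teq3 R12 R21 R111 R111 R21 x y.
Definition Madd (x y : Mel) : Mel := x ++ y.
Definition Mscale (c : R[i]) (x : Mel) : Mel :=
  [seq (c *: t.1.1, t.1.2, t.2) | t <- x].
Definition Mlact (r : P) (x : Mel) : Mel := [seq (r * t.1.1, t.1.2, t.2) | t <- x].
Definition Mract (x : Mel) (r : P) : Mel := [seq (t.1.1, t.1.2, t.2 * r) | t <- x].
Definition Mhomrep (d : nat) (x : Mel) : Prop :=
  forall t, t \in x -> exists d1 d2 d3, d = (d1 + d2 + d3)%N /\
    [/\ homdeg 0 d1 t.1.1, homdeg 0 d2 t.1.2 & homdeg 0 d3 t.2].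
Definition Mhom (d : nat) (x : Mel) : Prop :=
  exists y, [/\ Mvalid y, Meq x y & Mhomrep d y].

(* The bimodule  N = (R_21 (x)_{R_3} R_21)  (+)  R_21{2}.                   *)
Definition Nel := (seq (P * P) * P)%type.
Definition Nvalid (x : Nel) := valid2 R21 R21 x.1 /\ R21 x.2.
Definition Neq (x y : Nel) := teq2 R3 R21 R21 x.1 y.1 /\ x.2 = y.2.
Definition Nadd (x y : Nel) : Nel := (x.1 ++ y.1, x.2 + y.2).
Definition Nscale (c : R[i]) (x : Nel) : Nel :=
  ([seq (c *: t.1, t.2) | t <- x.1], c *: x.2).
Definition Nlact (r : P) (x : Nel) : Nel :=
  ([seq (r * t.1, t.2) | t <- x.1], r * x.2).
Definition Nract (x : Nel) (r : P) : Nel :=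
  ([seq (t.1, t.2 * r) | t <- x.1], x.2 * r).
Definition Nhomrep (d : nat) (x : Nel) : Prop :=
  (forall t, t \in x.1 -> exists d1 d2, d = (d1 + d2)%N /\
      homdeg 0 d1 t.1 /\ homdeg 0 d2 t.2)
  /\ homdeg 2 d x.2.
Definition Nhom (d : nat) (x : Nel) : Prop :=
  exists y, [/\ Nvalid y, Neq x y & Nhomrep d y].

Definition graded_bimod_iso_MN (phi : Mel -> Nel) : Prop :=
      (forall x, Mvalid x -> Nvalid (phi x)) /\
      (forall x y, Mvalid x -> Mvalid y -> Meq x y -> Neq (phi x) (phi y)) /\
      (forall x y, Mvalid x -> Mvalid y -> Neq (phi (Madd x y)) (Nadd (phi x) (phi y))) /\
      (forall c x, Mvalid x -> Neq (phi (Mscale c x)) (Nscale c (phi x))) /\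
      (forall r x, R21 r -> Mvalid x -> Neq (phi (Mlact r x)) (Nlact r (phi x))) /\
      (forall r x, R21 r -> Mvalid x -> Neq (phi (Mract x r)) (Nract (phi x) r)) /\
      (forall x y, Mvalid x -> Mvalid y -> Neq (phi x) (phi y) -> Meq x y) /\
      (forall z, Nvalid z -> exists x, Mvalid x /\ Neq (phi x) z) /\
      (forall d x, Mvalid x -> (Mhom d x <-> Nhom d (phi x))).

End Defs.

(* Main.v *)
Require Import Defs.
From HB Require Import structures.
From mathcomp Require Import all_boot all_order all_algebra all_fingroup.
From mathcomp Require Import mpoly complex reals.
From mathcomp Require Import ring.

Set Implicit Arguments.
Unset Strict Implicit.
Unset Printing Implicit Defensive.
Import Order.TTheory GRing.Theory Num.Theory.
Local Open Scope ring_scope.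


Section A.
Variable R : realType.
Local Notation P := (P R).
Implicit Types (w p q : P).

Definition Sm : 'S_3 -> P -> P := locked (@msym 3 _).
Lemma SmE : Sm = @msym 3 _. Proof. by rewrite /Sm -lock. Qed.

Lemma SmD s : {morph Sm s : x y / x + y}. Proof. by move=> x y; rewrite SmE msymD. Qed.
Lemma SmN s : {morph Sm s : x / - x}. Proof. by move=> x; rewrite SmE msymN. Qed.
Lemma SmB s : {morph Sm s : x y / x - y}. Proof. by move=> x y; rewrite SmE msymB. Qed.
Lemma SmM s : {morph Sm s : x y / x * y}. Proof. by move=> x y; rewrite SmE msymM. Qed.
Lemma SmZ s (c : R[i]) p : Sm s (c *: p) = c *: Sm s p. Proof. by rewrite SmE msymZ. Qed.
Lemma Sm0 s : Sm s 0 = 0. Proof. by rewrite SmE msym0. Qed.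
Lemma Sm1 s : Sm s 1 = 1. Proof. by rewrite SmE msym1. Qed.
Lemma SmX (s : 'S_3) (k : 'I_3) : Sm s ('X_k : P) = 'X_(s k).
Proof. by rewrite SmE /msym mmapX mmap1U. Qed.
Lemma SmMm (s1 s2 : 'S_3) p : Sm (s1 * s2)%g p = Sm s2 (Sm s1 p).
Proof. by rewrite SmE msymMm. Qed.
Lemma SmK (i j : 'I_3) p : Sm (tperm i j) (Sm (tperm i j) p) = p.
Proof. by rewrite -SmMm tperm2 SmE msym1m. Qed.
Lemma SmX2 s p : Sm s (p ^+ 2) = Sm s p ^+ 2.
Proof. by rewrite !expr2 SmM. Qed.

Definition X1 : P := 'X_i0.
Definition X2 : P := 'X_i1.
Definition X3 : P := 'X_i2.
Definition ss : 'S_3 := tperm i0 i1.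
Definition tt : 'S_3 := tperm i1 i2.

Lemma sX1 : Sm ss X1 = X2. Proof. by rewrite SmX /ss tpermL. Qed.
Lemma sX2 : Sm ss X2 = X1. Proof. by rewrite SmX /ss tpermR. Qed.
Lemma sX3 : Sm ss X3 = X3. Proof. by rewrite SmX /ss tpermD. Qed.
Lemma tX1 : Sm tt X1 = X1. Proof. by rewrite SmX /tt tpermD. Qed.
Lemma tX2 : Sm tt X2 = X3. Proof. by rewrite SmX /tt tpermL. Qed.
Lemma tX3 : Sm tt X3 = X2. Proof. by rewrite SmX /tt tpermR. Qed.

Lemma R21E p : R21 p = (Sm ss p == p). Proof. by rewrite SmE. Qed.
Lemma R12E p : R12 p = (Sm tt p == p). Proof. by rewrite SmE. Qed.

Lemma Xi_neq (i j : 'I_3) : i != j -> ('X_i - 'X_j : P) != 0.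
Proof.
move=> ij; have ji : j != i by rewrite eq_sym.
apply/negP => /eqP /(congr1 (mcoeff U_(i))).
rewrite mcoeffB !mcoeffXU eqxx (negbTE ji) subr0 mcoeff0 => /eqP.
by rewrite oner_eq0.
Qed.

Lemma X12 : X1 - X2 != 0. Proof. exact: Xi_neq. Qed.
Lemma X23 : X2 - X3 != 0. Proof. exact: Xi_neq. Qed.
Lemma X13 : X1 - X3 != 0. Proof. exact: Xi_neq. Qed.

Lemma mpoly_gen (Q : P -> Prop) :
  Q 0 -> Q 1 -> (forall i, Q 'X_i) ->
  (forall p q, Q p -> Q q -> Q (p + q)) ->
  (forall p q, Q p -> Q q -> Q (p * q)) ->
  (forall (c : R[i]) p, Q p -> Q (c *: p)) ->
  forall p, Q p.
Proof.
move=> Q0 Q1 QX QD QM QZ; elim/mpolyind => // c m p _ _ Qp.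
apply: QD => //; apply: QZ.
rewrite mpolyXE_id; apply: big_ind => // i _.
by elim: (m i) => [|k IH]; rewrite ?expr0 // exprS; apply: QM.
Qed.

Lemma exD (i j : 'I_3) (w : P) :
  exists q, ('X_i - 'X_j) * q == w - Sm (tperm i j) w.
Proof.
have [->|ij] := eqVneq i j.
  by exists 0; rewrite tperm1 SmE msym1m mulr0 subrr.
pose Q (w : P) := exists q, ('X_i - 'X_j) * q = w - Sm (tperm i j) w.
suff : Q w by case=> q Hq; exists q; apply/eqP.
apply: mpoly_gen => {w}.
- by exists 0; rewrite Sm0 mulr0 subr0.
- by exists 0; rewrite Sm1 mulr0 subrr.
- move=> k; rewrite /Q SmX.
  have [->|ki] := eqVneq k i; first by exists 1; rewrite tpermL mulr1.
  have [->|kj] := eqVneq k j; first by exists (-1); rewrite tpermR mulrN1 opprB.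
  by exists 0; rewrite tpermD 1?eq_sym // mulr0 subrr.
- by move=> p q [a Ha] [b Hb]; exists (a + b); rewrite SmD mulrDr Ha Hb opprD addrACA.
- move=> p q [a Ha] [b Hb]; exists (a * q + Sm (tperm i j) p * b).
  by rewrite SmM mulrDr mulrA Ha mulrCA Hb mulrBl mulrBr addrA subrK.
- by move=> c p [a Ha]; exists (c *: a); rewrite SmZ -scalerAr Ha scalerBr.
Qed.

Definition Dqraw (i j : 'I_3) (w : P) : P := xchoose (exD i j w).
Definition Dq : 'I_3 -> 'I_3 -> P -> P := locked Dqraw.
Lemma DqE : Dq = Dqraw. Proof. by rewrite /Dq -lock. Qed.

Lemma DqP i j w : ('X_i - 'X_j) * Dq i j w = w - Sm (tperm i j) w.
Proof. by rewrite DqE; exact/eqP/(xchooseP (exD i j w)). Qed.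

Lemma Dq_char i j w q : i != j ->
  ('X_i - 'X_j) * q = w - Sm (tperm i j) w -> Dq i j w = q.
Proof. by move=> ij Hq; apply: (mulfI (Xi_neq ij)); rewrite DqP Hq. Qed.

Lemma Dq_sym i j w : i != j -> Sm (tperm i j) (Dq i j w) = Dq i j w.
Proof.
move=> ij; apply: (mulfI (Xi_neq ij)).
have := congr1 (Sm (tperm i j)) (DqP i j w).
rewrite SmM !SmB SmK !SmX tpermL tpermR => H.
apply: oppr_inj; by rewrite -mulNr opprB H DqP opprB.
Qed.

End A.
Arguments X1 {R}.
Arguments X2 {R}.
Arguments X3 {R}.
Arguments sX1 {R}. Arguments sX2 {R}. Arguments sX3 {R}.
Arguments tX1 {R}. Arguments tX2 {R}. Arguments tX3 {R}.
Arguments X12 {R}. Arguments X23 {R}. Arguments X13 {R}.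


Section A2.
Variable R : realType.
Local Notation P := (P R).
Implicit Types (w p q s : P).

Section Gen.
Variables (i j : 'I_3).
Hypothesis ij : i != j.
Local Notation D := (Dq (R:=R) i j).
Local Notation T := (Sm (tperm i j)).

Lemma DqD w w' : D (w + w') = D w + D w'.
Proof. by apply: (Dq_char ij); rewrite mulrDr !DqP SmD opprD addrACA. Qed.
Lemma DqZ (c : R[i]) w : D (c *: w) = c *: D w.
Proof. by apply: (Dq_char ij); rewrite -scalerAr DqP SmZ scalerBr. Qed.
Lemma Dq0 : D 0 = 0.
Proof. by apply: (Dq_char ij); rewrite Sm0 mulr0 subr0. Qed.
Lemma DqN w : D (- w) = - D w.
Proof. by apply: (Dq_char ij); rewrite mulrN DqP SmN opprB opprK addrC. Qed.
Lemma DqB w w' : D (w - w') = D w - D w'.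
Proof. by rewrite DqD DqN. Qed.
Lemma Dq_mull s w : T s = s -> D (s * w) = s * D w.
Proof. by move=> Hs; apply: (Dq_char ij); rewrite mulrCA DqP SmM Hs mulrBr. Qed.
Lemma Dq_inv w : T w = w -> D w = 0.
Proof. by move=> Hw; apply: (Dq_char ij); rewrite Hw subrr mulr0. Qed.
Lemma Dq_sum (I : Type) (r : seq I) (F : I -> P) :
  D (\sum_(x <- r) F x) = \sum_(x <- r) D (F x).
Proof.
elim: r => [|x r IH]; first by rewrite !big_nil Dq0.
by rewrite !big_cons DqD IH.
Qed.
Lemma Dq_uniq p q : T p = p -> T q = q -> D (p + q * 'X_i) = q.
Proof.
move=> Hp Hq; apply: (Dq_char ij).
by rewrite SmD SmM Hp Hq SmX tpermL opprD addrACA subrr add0r -mulrBr mulrC.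
Qed.
End Gen.

Lemma i01 : i0 != i1. Proof. by []. Qed.
Lemma i12 : i1 != i2. Proof. by []. Qed.

Definition D1 := Dq (R:=R) i0 i1.
Definition Qd := Dq (R:=R) i1 i2.

Definition Pp : P -> P := locked (fun w => w - X2 * Qd w).
Definition L1 : P -> P := locked (fun u => u - X1 * D1 u).
Lemma PpE w : Pp w = w - X2 * Qd w. Proof. by rewrite /Pp -lock. Qed.
Lemma L1E u : L1 u = u - X1 * D1 u. Proof. by rewrite /L1 -lock. Qed.

Lemma QdP w : (X2 - X3) * Qd w = w - Sm tt w. Proof. exact: DqP. Qed.
Lemma D1P w : (X1 - X2) * D1 w = w - Sm ss w. Proof. exact: DqP. Qed.
Lemma Qd_char w q : (X2 - X3) * q = w - Sm tt w -> Qd w = q.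
Proof. exact: Dq_char. Qed.
Lemma D1_char w q : (X1 - X2) * q = w - Sm ss w -> D1 w = q.
Proof. exact: Dq_char. Qed.
Lemma Qd_sym w : Sm tt (Qd w) = Qd w. Proof. exact: Dq_sym. Qed.
Lemma D1_sym w : Sm ss (D1 w) = D1 w. Proof. exact: Dq_sym. Qed.
Lemma QdD w w' : Qd (w + w') = Qd w + Qd w'. Proof. exact: DqD. Qed.
Lemma D1D w w' : D1 (w + w') = D1 w + D1 w'. Proof. exact: DqD. Qed.
Lemma QdN w : Qd (- w) = - Qd w. Proof. exact: DqN. Qed.
Lemma D1N w : D1 (- w) = - D1 w. Proof. exact: DqN. Qed.
Lemma QdB w w' : Qd (w - w') = Qd w - Qd w'. Proof. exact: DqB. Qed.
Lemma D1B w w' : D1 (w - w') = D1 w - D1 w'. Proof. exact: DqB. Qed.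
Lemma QdZ c w : Qd (c *: w) = c *: Qd w. Proof. exact: DqZ. Qed.
Lemma D1Z c w : D1 (c *: w) = c *: D1 w. Proof. exact: DqZ. Qed.
Lemma Qd0 : Qd 0 = 0. Proof. exact: Dq0. Qed.
Lemma D10 : D1 0 = 0. Proof. exact: Dq0. Qed.
Lemma Qd_mull s w : Sm tt s = s -> Qd (s * w) = s * Qd w.
Proof. exact: Dq_mull. Qed.
Lemma D1_mull s w : Sm ss s = s -> D1 (s * w) = s * D1 w.
Proof. exact: Dq_mull. Qed.
Lemma Qd_inv w : Sm tt w = w -> Qd w = 0.
Proof. exact: Dq_inv. Qed.
Lemma D1_inv w : Sm ss w = w -> D1 w = 0.
Proof. exact: Dq_inv. Qed.
Lemma Qd_sum (I : Type) (r : seq I) (F : I -> P) :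
  Qd (\sum_(x <- r) F x) = \sum_(x <- r) Qd (F x).
Proof. exact: Dq_sum. Qed.
Lemma D1_sum (I : Type) (r : seq I) (F : I -> P) :
  D1 (\sum_(x <- r) F x) = \sum_(x <- r) D1 (F x).
Proof. exact: Dq_sum. Qed.
Lemma Qd_uniq p q : Sm tt p = p -> Sm tt q = q -> Qd (p + q * X2) = q.
Proof. exact: Dq_uniq. Qed.
Lemma D1_uniq p q : Sm ss p = p -> Sm ss q = q -> D1 (p + q * X1) = q.
Proof.
move=> Hp Hq; apply: D1_char.
by rewrite SmD SmM Hp Hq sX1 opprD addrACA subrr add0r -mulrBr mulrC.
Qed.

Lemma Pp_decomp w : w = Pp w + Qd w * X2.
Proof. by rewrite PpE mulrC subrK. Qed.
Lemma L1_decomp u : u = L1 u + D1 u * X1.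
Proof. by rewrite L1E mulrC subrK. Qed.
Lemma solve_sub (x y z : P) : z = x - y -> y = x - z.
Proof. by move->; rewrite opprB addrC subrK. Qed.

Lemma Pp_sym w : Sm tt (Pp w) = Pp w.
Proof.
rewrite !PpE SmB SmM tX2 Qd_sym (solve_sub (QdP w)).
ring.
Qed.
Lemma L1_sym u : Sm ss (L1 u) = L1 u.
Proof.
rewrite !L1E SmB SmM sX1 D1_sym (solve_sub (D1P u)).
ring.
Qed.
End A2.


Ltac permtac := apply/permP; case => [[|[|[|//]]] ?]; rewrite ?permM; apply/val_inj; by rewrite !permE.

Lemma braid : (tt * ss * tt = ss * tt * ss :> 'S_3)%g.
Proof. permtac. Qed.

Lemma tperm3 (x y : 'I_3) :
  [\/ tperm x y = 1%g, tperm x y = ss, tperm x y = tt | tperm x y = (ss * tt * ss)%g].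
Proof.
case: x => [[|[|[|//]]] Hx]; case: y => [[|[|[|//]]] Hy].
- by apply: Or41; permtac.
- by apply: Or42; permtac.
- by apply: Or44; permtac.
- by apply: Or42; permtac.
- by apply: Or41; permtac.
- by apply: Or43; permtac.
- by apply: Or44; permtac.
- by apply: Or43; permtac.
- by apply: Or41; permtac.
Qed.

Section A3.
Variable R : realType.
Local Notation P := (P R).
Implicit Types (w p q s g : P).
Local Notation sX1 := (@sX1 R). Local Notation sX2 := (@sX2 R). Local Notation sX3 := (@sX3 R).
Local Notation tX1 := (@tX1 R). Local Notation tX2 := (@tX2 R). Local Notation tX3 := (@tX3 R).

Lemma sym3 p : Sm ss p = p -> Sm tt p = p -> p \is symmetric.
Proof.
move=> Hs Ht.
have Hxy : forall x y, Sm (tperm x y) p = p.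
  move=> x y; case: (tperm3 x y) => ->.
  - by rewrite SmE msym1m.
  - exact: Hs.
  - exact: Ht.
  - by rewrite !SmMm Hs Ht Hs.
apply/issymP => sg; rewrite -SmE.
case: (prod_tpermP sg) => ts -> _.
elim: ts => [|[x y] ts IH]; first by rewrite big_nil SmE msym1m.
by rewrite big_cons SmMm /= Hxy IH.
Qed.

Lemma sym3_s p : p \is symmetric -> Sm ss p = p.
Proof. by move/issymP => H; rewrite SmE H. Qed.
Lemma sym3_t p : p \is symmetric -> Sm tt p = p.
Proof. by move/issymP => H; rewrite SmE H. Qed.

Lemma R3E p : R3 p <-> Sm ss p = p /\ Sm tt p = p.
Proof.
split; first by move=> H; split; [apply: sym3_s | apply: sym3_t].
by case=> ??; apply: sym3.
Qed.

Lemma Qd1 : Qd (1 : P) = 0. Proof. by apply: Qd_inv; rewrite Sm1. Qed.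
Lemma QdX1 : Qd (X1 : P) = 0. Proof. by apply: Qd_inv; rewrite tX1. Qed.
Lemma QdX2 : Qd (X2 : P) = 1. Proof. by apply: Qd_char; rewrite tX2 mulr1. Qed.
Lemma QdX3 : Qd (X3 : P) = -1. Proof. by apply: Qd_char; rewrite tX3 mulrN1 opprB. Qed.
Lemma QdX33 : Qd (X3 ^+ 2 : P) = - (X2 + X3).
Proof. apply: Qd_char; rewrite SmX2 tX3; ring. Qed.
Lemma Pp1 : Pp (1 : P) = 1. Proof. by rewrite !PpE Qd1 mulr0 subr0. Qed.
Lemma PpX2 : Pp (X2 : P) = 0. Proof. by rewrite !PpE QdX2 mulr1 subrr. Qed.
Lemma PpX3 : Pp (X3 : P) = X2 + X3. Proof. rewrite !PpE QdX3; ring. Qed.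
Lemma PpX33 : Pp (X3 ^+ 2 : P) = X2 ^+ 2 + X2 * X3 + X3 ^+ 2.
Proof. rewrite !PpE QdX33; ring. Qed.
Lemma D1X3 : D1 (X3 : P) = 0. Proof. by apply: D1_inv; rewrite sX3. Qed.
Lemma D11 : D1 (1 : P) = 0. Proof. by apply: D1_inv; rewrite Sm1. Qed.

Definition S1 : P := locked (X1 + X2 + X3).
Definition S2 : P := locked (X1 * X2 + X1 * X3 + X2 * X3).
Lemma S1E : S1 = X1 + X2 + X3. Proof. by rewrite /S1 -lock. Qed.
Lemma S2E : S2 = X1 * X2 + X1 * X3 + X2 * X3. Proof. by rewrite /S2 -lock. Qed.
Lemma sS1 : Sm ss S1 = S1. Proof. rewrite !S1E !SmD sX1 sX2 sX3; ring. Qed.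
Lemma tS1 : Sm tt S1 = S1. Proof. rewrite !S1E !SmD tX1 tX2 tX3; ring. Qed.
Lemma sS2 : Sm ss S2 = S2. Proof. rewrite !S2E !SmD !SmM sX1 sX2 sX3; ring. Qed.
Lemma tS2 : Sm tt S2 = S2. Proof. rewrite !S2E !SmD !SmM tX1 tX2 tX3; ring. Qed.

Lemma QdPpM w r :
  Pp (w * r) = Pp w * Pp r - X2 * X3 * Qd w * Qd r /\
  Qd (w * r) = Pp w * Qd r + Qd w * Pp r + (X2 + X3) * Qd w * Qd r.
Proof.
set A := Pp w * Pp r - X2 * X3 * Qd w * Qd r.
set B := Pp w * Qd r + Qd w * Pp r + (X2 + X3) * Qd w * Qd r.
have E : w * r = A + B * X2.
  rewrite {1}(Pp_decomp w) {1}(Pp_decomp r) /A /B.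
  move: (Pp w) (Pp r) (Qd w) (Qd r) => a b c d; ring.
have tA : Sm tt A = A.
  rewrite /A SmB !SmM !Pp_sym !Qd_sym tX2 tX3; ring.
have tB : Sm tt B = B.
  rewrite /B !SmD !SmM !SmD !Pp_sym !Qd_sym tX2 tX3; ring.
have QB : Qd (w * r) = B by rewrite E Qd_uniq.
split=> //.
by rewrite !PpE QB E mulrC addrK.
Qed.

Lemma Pp_mull s w : Sm tt s = s -> Pp (s * w) = s * Pp w.
Proof. by move=> Hs; rewrite !PpE Qd_mull // mulrBr mulrCA. Qed.
Lemma PpD w w' : Pp (w + w') = Pp w + Pp w'.
Proof. rewrite !PpE QdD; ring. Qed.
Lemma PpZ c w : Pp (c *: w) = c *: Pp w.
Proof. by rewrite !PpE QdZ scalerBr scalerAr. Qed.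
Lemma Pp0 : Pp (0 : P) = 0. Proof. by rewrite !PpE Qd0 mulr0 subr0. Qed.

End A3.
Arguments Qd1 {R}. Arguments QdX1 {R}. Arguments QdX2 {R}. Arguments QdX3 {R}. Arguments QdX33 {R}.
Arguments Pp1 {R}. Arguments PpX2 {R}. Arguments PpX3 {R}. Arguments PpX33 {R}.
Arguments D1X3 {R}. Arguments D11 {R}. Arguments S1 {R}. Arguments S2 {R}.
Arguments sS1 {R}. Arguments tS1 {R}. Arguments sS2 {R}. Arguments tS2 {R}. Arguments Pp0 {R}.


Lemma alg1 (K : idomainType) (x1 x2 x3 q A B g G1 G2 k k' : K) :
  x1 - x2 != 0 -> x1 - x3 != 0 ->
  (x1 - x2) * k = q - A -> (x1 - x3) * k' = q - B ->
  (x2 - x3) * q = g - G1 -> (x1 - x3) * A = g - G2 -> (x1 - x2) * B = G1 - G2 ->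
  k' = k.
Proof.
move=> h12 h13 Hk Hk' Hq Ha Hb; apply: (mulfI (mulf_neq0 h12 h13)).
have e1 : (x1 - x2) * (x1 - x3) * k' = (x1 - x2) * q - (x1 - x2) * B
  by rewrite -mulrA Hk'; ring.
have e2 : (x1 - x2) * (x1 - x3) * k = (x1 - x3) * q - (x1 - x3) * A
  by rewrite mulrAC Hk; ring.
rewrite e1 e2 Ha Hb.
have eg : g = (x2 - x3) * q + G1 by rewrite Hq subrK.
rewrite eg; ring.
Qed.

Lemma alg2 (K : idomainType) (x1 x2 x3 q A B g G1 G2 j j' : K) :
  x1 - x2 != 0 -> x1 - x3 != 0 ->
  (x1 - x2) * j = (g - x2 * q) - (g - x1 * A) ->
  (x1 - x3) * j' = (g - x2 * q) - (G1 - x1 * B) ->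
  (x2 - x3) * q = g - G1 -> (x1 - x3) * A = g - G2 -> (x1 - x2) * B = G1 - G2 ->
  j' = j.
Proof.
move=> h12 h13 Hj Hj' Hq Ha Hb; apply: (mulfI (mulf_neq0 h12 h13)).
have e1 : (x1 - x2) * (x1 - x3) * j' =
   (x1 - x2) * (g - x2 * q - G1) + x1 * ((x1 - x2) * B)
  by rewrite -mulrA Hj'; ring.
have e2 : (x1 - x2) * (x1 - x3) * j =
   (x1 - x3) * (g - x2 * q - g) + x1 * ((x1 - x3) * A)
  by rewrite mulrAC Hj; ring.
rewrite e1 e2 Ha Hb.
have eg : G1 = g - (x2 - x3) * q by rewrite Hq opprB addrC subrK.
rewrite eg; ring.
Qed.

Section A4.
Variable R : realType.
Local Notation P := (P R).
Implicit Types (w p q s g u v : P).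
Local Notation sX1 := (@sX1 R). Local Notation sX2 := (@sX2 R). Local Notation sX3 := (@sX3 R).
Local Notation tX1 := (@tX1 R). Local Notation tX2 := (@tX2 R). Local Notation tX3 := (@tX3 R).
Local Notation sS1 := (@sS1 R). Local Notation sS2 := (@sS2 R).
Local Notation tS1 := (@tS1 R). Local Notation tS2 := (@tS2 R).
Local Notation X12 := (@X12 R). Local Notation X13 := (@X13 R). Local Notation X23 := (@X23 R).

Definition cc2 : P -> P -> P := locked (fun u v => D1 v).
Definition cc1 : P -> P -> P := locked (fun u v => - D1 u - S1 * D1 v).
Definition cch : P -> P -> P := locked (fun u v => D1 u - L1 v).
Definition cc0 : P -> P -> P := locked (fun u v =>
  L1 u - S1 * cc1 u v - (S1 ^+ 2 - S2) * cc2 u v - X3 * cch u v).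
Lemma cc2E u v : cc2 u v = D1 v. Proof. by rewrite /cc2 -lock. Qed.
Lemma cc1E u v : cc1 u v = - D1 u - S1 * D1 v. Proof. by rewrite /cc1 -lock. Qed.
Lemma cchE u v : cch u v = D1 u - L1 v. Proof. by rewrite /cch -lock. Qed.
Lemma cc0E u v : cc0 u v =
  L1 u - S1 * cc1 u v - (S1 ^+ 2 - S2) * cc2 u v - X3 * cch u v.
Proof. by rewrite /cc0 -lock. Qed.

Lemma Sm_const (sg : 'S_3) (c : R[i]) : Sm sg (c%:MP : P) = c%:MP.
Proof. by rewrite -[c%:MP]mulr1 mul_mpolyC SmZ Sm1. Qed.

Lemma cc2_s u v : Sm ss (cc2 u v) = cc2 u v. Proof. by rewrite cc2E D1_sym. Qed.
Lemma cc1_s u v : Sm ss (cc1 u v) = cc1 u v.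
Proof. by rewrite cc1E SmB SmN SmM !D1_sym sS1. Qed.
Lemma cch_s u v : Sm ss (cch u v) = cch u v.
Proof. by rewrite cchE SmB D1_sym L1_sym. Qed.
Lemma cc0_s u v : Sm ss (cc0 u v) = cc0 u v.
Proof.
rewrite cc0E !SmB !SmM SmB SmX2 L1_sym cc1_s cc2_s cch_s sS1 sS2 sX3.
by [].
Qed.

Ltac expand_cc := rewrite ?cc0E ?cc1E ?cc2E ?cchE ?L1E ?S1E ?S2E.

Lemma cc_recon u v :
  u = cc0 u v + cc1 u v * (X2 + X3) + cc2 u v * (X2 ^+ 2 + X2 * X3 + X3 ^+ 2)
      + cch u v * X3 /\
  v = - cc1 u v - cc2 u v * (X2 + X3) - cch u v.
Proof.
split; expand_cc; move: (D1 u) (D1 v) => a b; ring.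
Qed.

Lemma ccD u v u' v' :
  [/\ cc0 (u + u') (v + v') = cc0 u v + cc0 u' v',
      cc1 (u + u') (v + v') = cc1 u v + cc1 u' v',
      cc2 (u + u') (v + v') = cc2 u v + cc2 u' v' &
      cch (u + u') (v + v') = cch u v + cch u' v'].
Proof.
split; expand_cc; rewrite !D1D; move: (D1 u) (D1 v) (D1 u') (D1 v') => a b c d; ring.
Qed.

Lemma cc00 : [/\ cc0 0 0 = 0, cc1 0 0 = 0, cc2 0 0 = 0 & cch 0 0 = (0 : P)].
Proof. split; expand_cc; rewrite !D10; ring. Qed.

Lemma ccM f u v : Sm ss f = f ->
  [/\ cc0 (f * u) (f * v) = f * cc0 u v,
      cc1 (f * u) (f * v) = f * cc1 u v,
      cc2 (f * u) (f * v) = f * cc2 u v &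
      cch (f * u) (f * v) = f * cch u v].
Proof.
move=> Hf; split; expand_cc; rewrite !D1_mull //;
  move: (D1 u) (D1 v) => a b; ring.
Qed.

Lemma ccZ (c : R[i]) u v :
  [/\ cc0 (c *: u) (c *: v) = c *: cc0 u v,
      cc1 (c *: u) (c *: v) = c *: cc1 u v,
      cc2 (c *: u) (c *: v) = c *: cc2 u v &
      cch (c *: u) (c *: v) = c *: cch u v].
Proof.
rewrite -!mul_mpolyC; exact: ccM (Sm_const _ _).
Qed.

Section Kappa.
Variable g : P.
Hypothesis Hg : Sm ss g = g.
Local Notation u := (Pp g).
Local Notation v := (Qd g).

Lemma t_D1Qd : Sm tt (D1 v) = D1 v.
Proof.
have Hk := D1P v.
have Hk' := congr1 (Sm tt) Hk.
rewrite SmM SmB SmB tX1 tX2 Qd_sym in Hk'.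
have Hq := QdP g.
have Ha := congr1 (Sm ss) Hq.
rewrite SmM SmB SmB Hg sX2 sX3 in Ha.
have Hb := congr1 (Sm tt) Ha.
rewrite SmM SmB SmB tX1 tX3 in Hb.
have br : Sm tt (Sm ss (Sm tt g)) = Sm ss (Sm tt g).
  have := congr1 (fun sg => Sm sg g) braid.
  by rewrite /= !SmMm Hg.
rewrite br in Hb.
exact: (alg1 X12 X13 Hk Hk' Hq Ha Hb).
Qed.

Lemma t_D1Pp : Sm tt (D1 u) = D1 u.
Proof.
have Hj := D1P u.
have Hj' := congr1 (Sm tt) Hj.
rewrite SmM SmB SmB tX1 tX2 Pp_sym in Hj'.
have Hq := QdP g.
have Ha := congr1 (Sm ss) Hq.
rewrite SmM SmB SmB Hg sX2 sX3 in Ha.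
have Hb := congr1 (Sm tt) Ha.
rewrite SmM SmB SmB tX1 tX3 in Hb.
have br : Sm tt (Sm ss (Sm tt g)) = Sm ss (Sm tt g).
  have := congr1 (fun sg => Sm sg g) braid.
  by rewrite /= !SmMm Hg.
rewrite br in Hb.
have su : Sm ss u = g - X1 * Sm ss v by rewrite PpE SmB SmM Hg sX2.
have tsu : Sm tt (Sm ss u) = Sm tt g - X1 * Sm tt (Sm ss v)
  by rewrite su SmB SmM tX1.
rewrite tsu in Hj'; rewrite su in Hj.
rewrite PpE in Hj Hj'.
rewrite PpE; exact: (alg2 X12 X13 Hj Hj' Hq Ha Hb).
Qed.

Lemma kappa_h : cch u v = 0.
Proof.
have [Hu Hv] := cc_recon u v.
have E1 : g = cc0 u v + cc1 u v * X3 + cc2 u v * X3 ^+ 2 + cch u v * (X3 - X2).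
  rewrite {1}(Pp_decomp g).
  move: (cc0 u v) (cc1 u v) (cc2 u v) (cch u v) Hu Hv => a b c d -> ->; ring.
have E2 := congr1 (Sm ss) E1.
rewrite Hg !SmD (SmM ss (cc2 u v)) SmX2 !SmM SmB cc0_s cc1_s cc2_s cch_s sX3 sX2 in E2.
have : cch u v * (X1 - X2) = 0.
  have : cch u v * (X3 - X2) = cch u v * (X3 - X1).
    apply: (addrI (cc0 u v + cc1 u v * X3 + cc2 u v * X3 ^+ 2)).
    by rewrite -E1 -E2.
  move=> H; have -> : (X1 - X2 : P) = (X3 - X2) - (X3 - X1) by ring.
  by rewrite mulrBr H subrr.
by move/eqP; rewrite mulf_eq0 (negbTE X12) orbF => /eqP.
Qed.

Lemma kappa_rec : g = cc0 u v + cc1 u v * X3 + cc2 u v * X3 ^+ 2.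
Proof.
have [Hu Hv] := cc_recon u v.
rewrite {1}(Pp_decomp g).
rewrite kappa_h in Hu Hv.
move: (cc0 u v) (cc1 u v) (cc2 u v) Hu Hv => a b c -> ->; ring.
Qed.

Lemma kappa_t2 : Sm tt (cc2 u v) = cc2 u v.
Proof. by rewrite cc2E t_D1Qd. Qed.
Lemma kappa_t1 : Sm tt (cc1 u v) = cc1 u v.
Proof. by rewrite cc1E SmB SmN SmM t_D1Qd t_D1Pp tS1. Qed.
Lemma kappa_t0 : Sm tt (cc0 u v) = cc0 u v.
Proof.
have [Hu _] := cc_recon u v.
have E : cc0 u v = u - cc1 u v * (X2 + X3) - cc2 u v * (X2 ^+ 2 + X2 * X3 + X3 ^+ 2).
  rewrite kappa_h in Hu.
  move: (cc0 u v) (cc1 u v) (cc2 u v) Hu => a b c ->; ring.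
rewrite E !SmB !SmM !SmD !SmM ?SmX2 Pp_sym kappa_t1 kappa_t2 !tX2 !tX3.
move: (cc1 u v) (cc2 u v) => a b; ring.
Qed.

End Kappa.
End A4.


Section B1.
Variable R : realType.
Local Notation P := (P R).
Implicit Types (w p q s g u v : P).
Local Notation sX1 := (@sX1 R). Local Notation sX2 := (@sX2 R). Local Notation sX3 := (@sX3 R).
Local Notation tX1 := (@tX1 R). Local Notation tX2 := (@tX2 R). Local Notation tX3 := (@tX3 R).
Local Notation Pp1 := (@Pp1 R). Local Notation PpX2 := (@PpX2 R).
Local Notation Qd1 := (@Qd1 R). Local Notation QdX2 := (@QdX2 R).

Lemma R21P p : reflect (Sm ss p = p) (R21 p).
Proof. by rewrite R21E; apply: eqP. Qed.
Lemma R12P p : reflect (Sm tt p = p) (R12 p).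
Proof. by rewrite R12E; apply: eqP. Qed.
Lemma R21_1 : R21 (1 : P). Proof. by apply/R21P; rewrite Sm1. Qed.
Lemma R21_X3 : R21 (X3 : P). Proof. by apply/R21P; rewrite sX3. Qed.
Lemma R21M p q : R21 p -> R21 q -> R21 (p * q).
Proof. by move=> /R21P Hp /R21P Hq; apply/R21P; rewrite SmM Hp Hq. Qed.
Lemma R21D p q : R21 p -> R21 q -> R21 (p + q).
Proof. by move=> /R21P Hp /R21P Hq; apply/R21P; rewrite SmD Hp Hq. Qed.
Lemma R21N p : R21 p -> R21 (- p).
Proof. by move=> /R21P Hp; apply/R21P; rewrite SmN Hp. Qed.
Lemma R21Z c p : R21 p -> R21 (c *: p).
Proof. by move=> /R21P Hp; apply/R21P; rewrite SmZ Hp. Qed.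

Definition U (x : Mel R) : P := \sum_(t <- x) t.1.1 * Pp (t.1.2 * t.2).
Definition V (x : Mel R) : P := \sum_(t <- x) t.1.1 * Qd (t.1.2 * t.2).

Definition psi (z : Nel R) : Mel R :=
  [seq (t.1, 1, t.2) | t <- z.1] ++ [:: (z.2 * X3, 1, 1); (- z.2, X2, 1)].

Lemma UpE z : U (psi z) = \sum_(t <- z.1) t.1 * Pp t.2 + z.2 * X3.
Proof.
rewrite /U /psi big_cat big_map /= !big_cons big_nil /=.
under eq_bigr do rewrite mul1r.
by rewrite !mulr1 Pp1 PpX2 mulr1 mulr0 !addr0.
Qed.
Lemma VpE z : V (psi z) = \sum_(t <- z.1) t.1 * Qd t.2 - z.2.
Proof.
rewrite /V /psi big_cat big_map /= !big_cons big_nil /=.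
under eq_bigr do rewrite mul1r.
by rewrite !mulr1 Qd1 QdX2 mulr0 mulr1 add0r addr0.
Qed.

Lemma balU : balanced3 (R12 (R:=R)) (R21 (R:=R)) (R111 (R:=R)) (R111 (R:=R)) (R21 (R:=R))
  (fun a b d => a * Pp (b * d)).
Proof.
split.
- by move=> a a' b d _ _ _ _; rewrite mulrDl.
- by move=> a b b' d _ _ _ _; rewrite mulrDl PpD mulrDr.
- by move=> a b d d' _ _ _ _; rewrite mulrDr PpD mulrDr.
- move=> c a b d _ _ _; split; first by rewrite scalerAl.
  split; first by rewrite -scalerAl PpZ scalerAr.
  by rewrite -scalerAr PpZ scalerAr.
- split.
  + move=> s a b d /R12P Hs _ _ _; by rewrite -(mulrA a s) -(mulrA s b d) (@Pp_mull R s (b * d) Hs).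
  + by move=> s a b d _ _ _ _; rewrite mulrA.
Qed.

Lemma balV : balanced3 (R12 (R:=R)) (R21 (R:=R)) (R111 (R:=R)) (R111 (R:=R)) (R21 (R:=R))
  (fun a b d => a * Qd (b * d)).
Proof.
split.
- by move=> a a' b d _ _ _ _; rewrite mulrDl.
- by move=> a b b' d _ _ _ _; rewrite mulrDl QdD mulrDr.
- by move=> a b d d' _ _ _ _; rewrite mulrDr QdD mulrDr.
- move=> c a b d _ _ _; split; first by rewrite scalerAl.
  split; first by rewrite -scalerAl QdZ scalerAr.
  by rewrite -scalerAr QdZ scalerAr.
- split.
  + move=> s a b d /R12P Hs _ _ _; by rewrite -(mulrA a s) -(mulrA s b d) (@Qd_mull R s (b * d) Hs).
  + by move=> s a b d _ _ _ _; rewrite mulrA.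
Qed.

Lemma Meq_UV x y : Meq x y -> U x = U y /\ V x = V y.
Proof.
move=> H; split; [exact: (H _ _ balU) | exact: (H _ _ balV)].
Qed.

Lemma NF (W : lmodType R[i]) (beta : P -> P -> P -> W) x :
  balanced3 (R12 (R:=R)) (R21 (R:=R)) (R111 (R:=R)) (R111 (R:=R)) (R21 (R:=R)) beta ->
  Mvalid x ->
  \sum_(t <- x) beta t.1.1 t.1.2 t.2 = beta (U x) 1 1 + beta (V x) X2 1.
Proof.
case=> Ha Hb Hd Hsc [Hs1 Hs2] Hx.
have b0 : forall b d, R21 d -> beta 0 b d = 0.
  move=> b d Hd0; have h := Ha 0 0 b d isT isT isT Hd0.
  rewrite addr0 in h.
  by apply: (addrI (beta 0 b d)); rewrite addr0 -h.
elim: x Hx => [|t x IH] Hx.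
  by rewrite /U /V !big_nil !b0 ?R21_1 // addr0.
have [_ _ Ht] : [/\ R111 t.1.1, R111 t.1.2 & R21 t.2].
  by apply: Hx; rewrite in_cons eqxx.
have Hx' : Mvalid x by move=> t' Ht'; apply: Hx; rewrite in_cons Ht' orbT.
rewrite big_cons IH // /U /V !big_cons.
rewrite !Ha // ?R21_1 //.
set w := t.1.2 * t.2.
have -> : beta t.1.1 t.1.2 t.2 = beta t.1.1 w 1.
  by rewrite Hs2 ?R21_1 // mulr1.
rewrite {1}(Pp_decomp w) Hb ?R21_1 //.
rewrite -[Pp w]mulr1 -Hs1 ?R21_1 //; last by apply/R12P; rewrite Pp_sym.
rewrite -Hs1 ?R21_1 //; last by apply/R12P; rewrite Qd_sym.
rewrite mulr1.
rewrite -!addrA; congr (_ + _); rewrite addrCA; congr (_ + _).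
Qed.

Lemma UV_Meq x y : Mvalid x -> Mvalid y -> U x = U y -> V x = V y -> Meq x y.
Proof.
move=> Hx Hy HU HV W beta Hb.
by rewrite (NF Hb Hx) (NF Hb Hy) HU HV.
Qed.

End B1.


Section B2.
Variable R : realType.
Local Notation P := (P R).
Implicit Types (w p q s g u v h : P).
Local Notation sX1 := (@sX1 R). Local Notation sX2 := (@sX2 R). Local Notation sX3 := (@sX3 R).
Local Notation tX1 := (@tX1 R). Local Notation tX2 := (@tX2 R). Local Notation tX3 := (@tX3 R).
Local Notation R21_1 := (@R21_1 R). Local Notation R21_X3 := (@R21_X3 R).

Lemma R21_sum (I : Type) (r : seq I) (F : I -> P) :
  (forall i, R21 (F i)) -> R21 (\sum_(i <- r) F i).
Proof.
move=> HF; elim: r => [|i r IH]; first by rewrite big_nil; apply/R21P; rewrite Sm0.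
by rewrite big_cons R21D.
Qed.

Definition Al (l : seq (P * P)) := \sum_(t <- l) t.1 * Pp t.2.
Definition Bl (l : seq (P * P)) := \sum_(t <- l) t.1 * Qd t.2.

Lemma cc_list (l : seq (P * P)) : valid2 (R21 (R:=R)) (R21 (R:=R)) l ->
  [/\ cc0 (Al l) (Bl l) = \sum_(t <- l) t.1 * cc0 (Pp t.2) (Qd t.2),
      cc1 (Al l) (Bl l) = \sum_(t <- l) t.1 * cc1 (Pp t.2) (Qd t.2),
      cc2 (Al l) (Bl l) = \sum_(t <- l) t.1 * cc2 (Pp t.2) (Qd t.2) &
      cch (Al l) (Bl l) = \sum_(t <- l) t.1 * cch (Pp t.2) (Qd t.2)].
Proof.
elim: l => [|t l IH] Hl.
  by rewrite /Al /Bl !big_nil; case: (@cc00 R).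
have [Ht1 _] : R21 t.1 /\ R21 t.2 by apply: Hl; rewrite in_cons eqxx.
have Hl' : valid2 (R21 (R:=R)) (R21 (R:=R)) l
  by move=> t' Ht'; apply: Hl; rewrite in_cons Ht' orbT.
have [e0 e1 e2 eh] := IH Hl'.
move: Ht1 => /R21P Ht1.
have [d0 d1 d2 dh] := ccD (t.1 * Pp t.2) (t.1 * Qd t.2) (Al l) (Bl l).
have [m0 m1 m2 mh] := ccM (Pp t.2) (Qd t.2) Ht1.
rewrite /Al /Bl !big_cons -/(Al l) -/(Bl l).
by rewrite d0 d1 d2 dh m0 m1 m2 mh e0 e1 e2 eh.
Qed.

Lemma cc_hX3 h : Sm ss h = h ->
  [/\ cc0 (h * X3) (- h) = 0, cc1 (h * X3) (- h) = 0,
      cc2 (h * X3) (- h) = 0 & cch (h * X3) (- h) = h].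
Proof.
move=> Hh.
have D1a : D1 (h * X3) = 0 by apply: D1_inv; rewrite SmM Hh sX3.
have D1b : D1 (- h) = 0 by apply: D1_inv; rewrite SmN Hh.
have c2 : cc2 (h * X3) (- h) = 0 by rewrite cc2E D1b.
have c1 : cc1 (h * X3) (- h) = 0 by rewrite cc1E D1a D1b; ring.
have ch : cch (h * X3) (- h) = h by rewrite cchE L1E D1a D1b; ring.
split=> //.
rewrite cc0E c1 c2 ch L1E D1a; ring.
Qed.

Lemma UpVp_split (z : Nel R) :
  U (psi z) = Al z.1 + z.2 * X3 /\ V (psi z) = Bl z.1 + - z.2.
Proof. by rewrite UpE VpE. Qed.

Lemma K_h (z : Nel R) : Nvalid z -> cch (U (psi z)) (V (psi z)) = z.2.
Proof.
case=> Hl /R21P Hh.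
have [eU eV] := UpVp_split z.
rewrite eU eV.
have [_ _ _ dh] := ccD (Al z.1) (Bl z.1) (z.2 * X3) (- z.2).
have [_ _ _ eh] := cc_list Hl.
have [_ _ _ hh] := cc_hX3 Hh.
rewrite dh eh hh big_seq big1 ?add0r // => t Ht.
have [_ /R21P Ht2] : R21 t.1 /\ R21 t.2 by apply: Hl.
by rewrite kappa_h // mulr0.
Qed.

Lemma R21_0 : R21 (0 : P). Proof. by apply/R21P; rewrite Sm0. Qed.
Lemma R21_sum_in (I : eqType) (r : seq I) (F : I -> P) :
  (forall i, i \in r -> R21 (F i)) -> R21 (\sum_(i <- r) F i).
Proof.
elim: r => [|i r IH] HF; first by rewrite big_nil R21_0.
rewrite big_cons R21D //; first by apply: HF; rewrite in_cons eqxx.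
by apply: IH => j Hj; apply: HF; rewrite in_cons Hj orbT.
Qed.
Lemma R21_X32 : R21 (X3 ^+ 2 : P). Proof. by rewrite expr2 R21M ?R21_X3. Qed.

Lemma kappa_R21 g : Sm ss g = g ->
  [/\ R21 (cc0 (Pp g) (Qd g)), R21 (cc1 (Pp g) (Qd g)) & R21 (cc2 (Pp g) (Qd g))].
Proof. by move=> _; split; apply/R21P; rewrite ?cc0_s ?cc1_s ?cc2_s. Qed.

Lemma kappa_R3 g : Sm ss g = g ->
  [/\ R3 (cc0 (Pp g) (Qd g)), R3 (cc1 (Pp g) (Qd g)) & R3 (cc2 (Pp g) (Qd g))].
Proof.
move=> Hg; split; apply/R3E; split.
- exact: cc0_s.
- exact: kappa_t0.
- exact: cc1_s.
- exact: kappa_t1.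
- exact: cc2_s.
- exact: kappa_t2.
Qed.

Lemma gamma_list (l : seq (P * P)) (W : lmodType R[i]) (gamma : P -> P -> W) :
  balanced2 (R3 (R:=R)) (R21 (R:=R)) (R21 (R:=R)) gamma ->
  valid2 (R21 (R:=R)) (R21 (R:=R)) l ->
  \sum_(t <- l) gamma t.1 t.2 =
    gamma (\sum_(t <- l) t.1 * cc0 (Pp t.2) (Qd t.2)) 1
    + gamma (\sum_(t <- l) t.1 * cc1 (Pp t.2) (Qd t.2)) X3
    + gamma (\sum_(t <- l) t.1 * cc2 (Pp t.2) (Qd t.2)) (X3 ^+ 2).
Proof.
case=> Ha Hb Hsa Hsb Hbal.
have g0 : forall b, R21 b -> gamma 0 b = 0.
  move=> b Hb0; have hh := Ha 0 0 b R21_0 R21_0 Hb0.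
  rewrite addr0 in hh.
  by apply: (addrI (gamma 0 b)); rewrite addr0 -hh.
elim: l => [|t l IH] Hl.
  by rewrite !big_nil !g0 ?R21_1 ?R21_X3 ?R21_X32 // !addr0.
have [Ht1 Ht2] : R21 t.1 /\ R21 t.2 by apply: Hl; rewrite in_cons eqxx.
have Hl' : valid2 (R21 (R:=R)) (R21 (R:=R)) l
  by move=> t' Ht'; apply: Hl; rewrite in_cons Ht' orbT.
have Hl'' : forall t', t' \in l -> R21 t'.1 /\ R21 t'.2 by [].
have SR : forall k : P -> P -> P, (forall g, Sm ss g = g -> R21 (k (Pp g) (Qd g))) ->
    R21 (\sum_(t' <- l) t'.1 * k (Pp t'.2) (Qd t'.2)).
  move=> k Hk; apply: R21_sum_in => t' /Hl'' [H1 /R21P H2].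
  by apply: R21M => //; apply: Hk.
have T0 := SR (@cc0 R) (fun g Hg => let: And3 a _ _ := kappa_R21 Hg in a).
have T1 := SR (@cc1 R) (fun g Hg => let: And3 _ a _ := kappa_R21 Hg in a).
have T2 := SR (@cc2 R) (fun g Hg => let: And3 _ _ a := kappa_R21 Hg in a).
move: Ht2 => /R21P Ht2.
have [k0R k1R k2R] := kappa_R21 Ht2.
have [r0 r1 r2] := kappa_R3 Ht2.
have rec := kappa_rec Ht2.
rewrite !big_cons IH //.
move: T0 T1 T2 k0R k1R k2R r0 r1 r2 rec.
set A0 := \sum_(_ <- _) _ * cc0 _ _.
set A1 := \sum_(_ <- _) _ * cc1 _ _.
set A2 := \sum_(_ <- _) _ * cc2 _ _.
set k0 := cc0 _ _. set k1 := cc1 _ _. set k2 := cc2 _ _.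
move=> T0 T1 T2 k0R k1R k2R r0 r1 r2 rec.
rewrite (Ha _ _ _ (R21M Ht1 k0R) T0 R21_1).
rewrite (Ha _ _ _ (R21M Ht1 k1R) T1 R21_X3).
rewrite (Ha _ _ _ (R21M Ht1 k2R) T2 R21_X32).
rewrite (Hbal _ _ _ r0 Ht1 R21_1) (Hbal _ _ _ r1 Ht1 R21_X3) (Hbal _ _ _ r2 Ht1 R21_X32).
have e : gamma t.1 t.2 = gamma t.1 (k0 * 1) + gamma t.1 (k1 * X3) + gamma t.1 (k2 * X3 ^+ 2).
  have R0 : R21 (k0 * 1) by rewrite mulr1.
  have R1' : R21 (k1 * X3) by rewrite R21M ?R21_X3.
  have R2' : R21 (k2 * X3 ^+ 2) by rewrite R21M ?R21_X32.
  rewrite -(Hb _ _ _ Ht1 R0 R1') -(Hb _ _ _ Ht1 (R21D R0 R1') R2').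
  by rewrite mulr1 -rec.
rewrite e.
move: (gamma t.1 (k0 * 1)) (gamma t.1 (k1 * X3)) (gamma t.1 (k2 * X3 ^+ 2)).
move: (gamma A0 1) (gamma A1 X3) (gamma A2 (X3 ^+ 2)) => d e' f a b c.
by rewrite addrACA (addrACA a b).
Qed.

Lemma K_gamma (z : Nel R) (W : lmodType R[i]) (gamma : P -> P -> W) :
  balanced2 (R3 (R:=R)) (R21 (R:=R)) (R21 (R:=R)) gamma -> Nvalid z ->
  \sum_(t <- z.1) gamma t.1 t.2 =
    gamma (cc0 (U (psi z)) (V (psi z))) 1 + gamma (cc1 (U (psi z)) (V (psi z))) X3
    + gamma (cc2 (U (psi z)) (V (psi z))) (X3 ^+ 2).
Proof.
move=> Hg [Hl /R21P Hh].
have [eU eV] := UpVp_split z.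
rewrite eU eV.
have [d0 d1 d2 _] := ccD (Al z.1) (Bl z.1) (z.2 * X3) (- z.2).
have [e0 e1 e2 _] := cc_list Hl.
have [h0 h1 h2 _] := cc_hX3 Hh.
rewrite d0 d1 d2 e0 e1 e2 h0 h1 h2 !addr0.
exact: gamma_list.
Qed.

Lemma UpVp_Neq z z' : Nvalid z -> Nvalid z' ->
  U (psi z) = U (psi z') -> V (psi z) = V (psi z') -> @Neq R z z'.
Proof.
move=> Hz Hz' HU HV; split.
  by move=> W gamma Hg; rewrite (K_gamma Hg Hz) (K_gamma Hg Hz') HU HV.
by rewrite -(K_h Hz) -(K_h Hz') HU HV.
Qed.

Lemma balP : balanced2 (R3 (R:=R)) (R21 (R:=R)) (R21 (R:=R)) (fun f g => f * Pp g).
Proof.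
split.
- by move=> a a' b _ _ _; rewrite mulrDl.
- by move=> a b b' _ _ _; rewrite PpD mulrDr.
- by move=> c a b _ _; rewrite scalerAl.
- by move=> c a b _ _; rewrite PpZ scalerAr.
- move=> s a b /R3E [_ Hs] _ _.
  by rewrite -(mulrA a s) (@Pp_mull R s b Hs).
Qed.
Lemma balQ : balanced2 (R3 (R:=R)) (R21 (R:=R)) (R21 (R:=R)) (fun f g => f * Qd g).
Proof.
split.
- by move=> a a' b _ _ _; rewrite mulrDl.
- by move=> a b b' _ _ _; rewrite QdD mulrDr.
- by move=> c a b _ _; rewrite scalerAl.
- by move=> c a b _ _; rewrite QdZ scalerAr.
- move=> s a b /R3E [_ Hs] _ _.
  by rewrite -(mulrA a s) (@Qd_mull R s b Hs).
Qed.

Lemma Neq_UpVp (z z' : Nel R) : @Neq R z z' -> U (psi z) = U (psi z') /\ V (psi z) = V (psi z').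
Proof.
case=> H H2.
have [eU eV] := UpVp_split z; have [eU' eV'] := UpVp_split z'.
rewrite eU eV eU' eV' /Al /Bl (H _ _ balP) (H _ _ balQ) H2.
by [].
Qed.
End B2.


Section C1.
Variable R : realType.
Local Notation P := (P R).
Implicit Types (w p q s g u v h r : P) (x y : Mel R) (z : Nel R).
Local Notation R21_1 := (@R21_1 R). Local Notation R21_X3 := (@R21_X3 R).
Local Notation R21_X32 := (@R21_X32 R).
Local Notation Pp1 := (@Pp1 R). Local Notation PpX3 := (@PpX3 R). Local Notation PpX33 := (@PpX33 R).
Local Notation Qd1 := (@Qd1 R). Local Notation QdX3 := (@QdX3 R). Local Notation QdX33 := (@QdX33 R).

Definition phi (x : Mel R) : Nel R :=
  ([:: (cc0 (U x) (V x), 1); (cc1 (U x) (V x), X3); (cc2 (U x) (V x), X3 ^+ 2)],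
   cch (U x) (V x)).

Lemma phi_valid x : Nvalid (phi x).
Proof.
split; last by apply/R21P; rewrite cch_s.
move=> t; rewrite !inE => /or3P [] /eqP -> /=; split;
  rewrite ?R21_1 ?R21_X3 ?R21_X32 //; apply/R21P;
  by rewrite ?cc0_s ?cc1_s ?cc2_s.
Qed.

Lemma Uphi x : U (psi (phi x)) = U x /\ V (psi (phi x)) = V x.
Proof.
rewrite UpE VpE /phi /= !big_cons big_nil /=.
rewrite Pp1 PpX3 PpX33 Qd1 QdX3 QdX33.
have [Hu Hv] := cc_recon (U x) (V x).
move: (cc0 (U x) (V x)) (cc1 (U x) (V x)) (cc2 (U x) (V x)) (cch (U x) (V x)) Hu Hv.
move=> a b c d -> ->; split; first by rewrite mulr1 addr0 !addrA.
by rewrite big_nil mulr0 add0r addr0 mulrN1 mulrN.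
Qed.

Lemma Neq_refl (z : Nel R) : @Neq R z z.
Proof. by split. Qed.


Lemma Mvalid_add x y : Mvalid x -> Mvalid y -> Mvalid (Madd x y).
Proof. by move=> Hx Hy t; rewrite mem_cat => /orP [/Hx|/Hy]. Qed.
Lemma Mvalid_scale c x : Mvalid x -> Mvalid (Mscale c x).
Proof. by move=> Hx t /mapP [t' /Hx [? ? ?] ->]. Qed.
Lemma Mvalid_lact r x : Mvalid x -> Mvalid (Mlact r x).
Proof. by move=> Hx t /mapP [t' /Hx [? ? ?] ->]. Qed.
Lemma Mvalid_ract r x : R21 r -> Mvalid x -> Mvalid (Mract x r).
Proof. move=> Hr Hx t /mapP [t' /Hx [Ha Hb Hc] ->]; split; [exact: Ha | exact: Hb | exact: (R21M Hc Hr)]. Qed.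
Lemma Mvalid_psi z : Nvalid z -> Mvalid (psi z).
Proof.
case=> Hl Hh t; rewrite mem_cat => /orP [/mapP [t' /Hl [? ?] ->] //|].
by rewrite !inE => /orP [] /eqP -> /=; split; rewrite ?R21_1.
Qed.

Lemma Nvalid_add z z' : Nvalid z -> Nvalid z' -> Nvalid (Nadd z z').
Proof.
case=> H1 H2 [H1' H2']; split; last exact: (R21D H2 H2').
by move=> t; rewrite mem_cat => /orP [/H1|/H1'].
Qed.
Lemma Nvalid_scale c z : Nvalid z -> Nvalid (Nscale c z).
Proof.
case=> H1 H2; split; last exact: (R21Z c H2).
move=> t /mapP [t' /H1 [Ha Hb] ->]; split; [exact: (R21Z c Ha) | exact: Hb].
Qed.
Lemma Nvalid_lact r z : R21 r -> Nvalid z -> Nvalid (Nlact r z).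
Proof.
move=> Hr [H1 H2]; split; last exact: (R21M Hr H2).
move=> t /mapP [t' /H1 [Ha Hb] ->]; split; [exact: (R21M Hr Ha) | exact: Hb].
Qed.
Lemma Nvalid_ract r z : R21 r -> Nvalid z -> Nvalid (Nract z r).
Proof.
move=> Hr [H1 H2]; split; last exact: (R21M H2 Hr).
move=> t /mapP [t' /H1 [Ha Hb] ->]; split; [exact: Ha | exact: (R21M Hb Hr)].
Qed.

Lemma UV_add x y : U (Madd x y) = U x + U y /\ V (Madd x y) = V x + V y.
Proof. by rewrite /U /V /Madd !big_cat. Qed.
Lemma UV_scale c x : U (Mscale c x) = c *: U x /\ V (Mscale c x) = c *: V x.
Proof.
rewrite /U /V /Mscale !big_map !scaler_sumr; split; apply: eq_bigr => t _ /=;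
  by rewrite scalerAl.
Qed.
Lemma UV_lact r x : U (Mlact r x) = r * U x /\ V (Mlact r x) = r * V x.
Proof.
rewrite /U /V /Mlact !big_map !mulr_sumr; split; apply: eq_bigr => t _ /=;
  by rewrite mulrA.
Qed.

Definition RU u v r := u * Pp r - X2 * X3 * v * Qd r.
Definition RV u v r := u * Qd r + v * Pp r + (X2 + X3) * v * Qd r.

Lemma sum_right (T : Type) (l : seq T) (fa fw : T -> P) r :
  \sum_(t <- l) fa t * Pp (fw t * r) =
     RU (\sum_(t <- l) fa t * Pp (fw t)) (\sum_(t <- l) fa t * Qd (fw t)) r /\
  \sum_(t <- l) fa t * Qd (fw t * r) =
     RV (\sum_(t <- l) fa t * Pp (fw t)) (\sum_(t <- l) fa t * Qd (fw t)) r.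
Proof.
rewrite /RU /RV; elim: l => [|t l [IH1 IH2]].
  by rewrite !big_nil; split; ring.
rewrite !big_cons IH1 IH2.
have [e1 e2] := QdPpM (fw t) r.
rewrite e1 e2.
move: (\sum_(t <- l) _) (\sum_(t <- l) _) (Pp (fw t)) (Qd (fw t)) (Pp r) (Qd r) (fa t).
move=> A B a b c d f; split; ring.
Qed.

Lemma UV_ract r x : U (Mract x r) = RU (U x) (V x) r /\ V (Mract x r) = RV (U x) (V x) r.
Proof.
rewrite /U /V /Mract !big_map /=.
have -> : \sum_(t <- x) t.1.1 * Pp (t.1.2 * (t.2 * r)) =
          \sum_(t <- x) t.1.1 * Pp ((t.1.2 * t.2) * r)
  by apply: eq_bigr => t _; rewrite mulrA.
have -> : \sum_(t <- x) t.1.1 * Qd (t.1.2 * (t.2 * r)) =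
          \sum_(t <- x) t.1.1 * Qd ((t.1.2 * t.2) * r)
  by apply: eq_bigr => t _; rewrite mulrA.
exact: (sum_right x (fun t => t.1.1) (fun t => t.1.2 * t.2)).
Qed.

Lemma Up_add z z' :
  U (psi (Nadd z z')) = U (psi z) + U (psi z') /\ V (psi (Nadd z z')) = V (psi z) + V (psi z').
Proof.
rewrite !UpE !VpE /Nadd /= !big_cat.
move: (\sum_(t <- z.1) _) (\sum_(t <- z'.1) _) (\sum_(t <- z.1) _) (\sum_(t <- z'.1) _).
move=> a b c d; split; first by rewrite mulrDl addrACA.
by rewrite opprD addrACA.
Qed.
Lemma Up_scale c z :
  U (psi (Nscale c z)) = c *: U (psi z) /\ V (psi (Nscale c z)) = c *: V (psi z).
Proof.
rewrite !UpE !VpE /Nscale /= !big_map !scalerDr scalerN !scaler_sumr.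
split; congr (_ + _); rewrite ?scalerAl //; apply: eq_bigr => t _ /=; by rewrite scalerAl.
Qed.
Lemma Up_lact r z :
  U (psi (Nlact r z)) = r * U (psi z) /\ V (psi (Nlact r z)) = r * V (psi z).
Proof.
rewrite !UpE !VpE /Nlact /= !big_map !mulrDr mulrN !mulr_sumr.
split; congr (_ + _); rewrite ?mulrA //; apply: eq_bigr => t _ /=; by rewrite mulrA.
Qed.
Lemma Up_ract r z :
  U (psi (Nract z r)) = RU (U (psi z)) (V (psi z)) r /\
  V (psi (Nract z r)) = RV (U (psi z)) (V (psi z)) r.
Proof.
rewrite !UpE !VpE /Nract /= !big_map /=.
have [e1 e2] := sum_right z.1 (fun t => t.1) (fun t => t.2) r.
rewrite e1 e2 /RU /RV.
have Hr := Pp_decomp r.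
move: (\sum_(t <- z.1) _) (\sum_(t <- z.1) _) (Pp r) (Qd r) Hr => A B a b ->.
split; ring.
Qed.

End C1.


Section H1.
Variable R : realType.
Local Notation P := (P R).
Implicit Types (w p q s g u v h : P).

Lemma Sm_homog (sg : 'S_3) n p : p \is n.-homog -> Sm sg p \is n.-homog.
Proof.
move=> /dhomogP Hp; apply/dhomogP => m; rewrite SmE mcoeff_msupp mcoeff_sym.
rewrite -mcoeff_msupp => /Hp <-; exact: esym (mdeg_mperm m sg).
Qed.

Lemma Xi_homog (i : 'I_3) : ('X_i : P) \is 1.-homog.
Proof. by rewrite dhomogX; apply/eqP; exact: mdeg1. Qed.

Lemma pihomog_big k p : (msize p <= k)%N -> pihomog mdeg k p = 0.
Proof.
move=> Hk; rewrite pihomogE big_seq_cond big_pred0 // => m.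
apply/negbTE/andP => -[Hm /eqP Hmk].
have := msize_mdeg_lt Hm; rewrite Hmk => /leq_trans/(_ Hk).
by rewrite ltnn.
Qed.

Lemma pihomog_lin (l : P) q k : l \is 1.-homog ->
  pihomog mdeg k.+1 (l * q) = l * pihomog mdeg k q /\ pihomog mdeg 0 (l * q) = 0.
Proof.
move=> Hl.
set K := (msize q + k.+1)%N.
have HK : (msize q <= K)%N by rewrite leq_addr.
have Eq := pihomog_partitionE HK.
have hom : forall d : 'I_K, l * pihomog mdeg d q \is (1 + d).-homog.
  by move=> d; apply: dhomogM => //; apply: pihomogP.
split.
- have Hk : (k < K)%N by rewrite /K addnS ltnS leq_addl.
  rewrite {1}Eq mulr_sumr raddf_sum /=.
  rewrite (bigD1 (Ordinal Hk)) //=.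
  rewrite pihomog_dE; last exact: (hom (Ordinal Hk)).
  rewrite big1 ?addr0 // => d Hd.
  apply: (pihomog_ne0 _ (hom d)); rewrite add1n eqSS.
  by apply: contra Hd => /eqP Hdk; apply/eqP/val_inj.
- rewrite {1}Eq mulr_sumr raddf_sum /= big1 // => d _.
  exact: (pihomog_ne0 _ (hom d)).
Qed.

Section Gen.
Variables (i j : 'I_3).
Hypothesis ij : i != j.

Lemma Dq_homog n w : w \is n.-homog ->
  (n = 0%N -> Dq i j w = 0) /\ Dq i j w \is n.-1.-homog.
Proof.
move=> Hw.
set q := Dq i j w.
have Hl : ('X_i - 'X_j : P) \is 1.-homog by apply: rpredB; apply: Xi_homog.
have Hwt : w - Sm (tperm i j) w \is n.-homog by apply: rpredB => //; apply: Sm_homog.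
have Hz : forall k, k.+1 != n -> pihomog mdeg k q = 0.
  move=> k Hk.
  have [e1 _] := pihomog_lin q k Hl.
  have : ('X_i - 'X_j) * pihomog mdeg k q = 0.
    by rewrite -e1 /q DqP (pihomog_ne0 _ Hwt) // eq_sym.
  by move/eqP; rewrite mulf_eq0 (negbTE (@Xi_neq R _ _ ij)) /= => /eqP.
have Eq := pihomog_partitionE (leqnn (msize q)).
split.
  move=> n0; rewrite Eq big1 // => d _; apply: Hz; by rewrite n0.
rewrite Eq; apply: rpred_sum => d _.
have [Hd|Hd] := eqVneq (nat_of_ord d).+1 n.
  by rewrite -Hd /=; apply: pihomogP.
by rewrite Hz // dhomog0.
Qed.
End Gen.

Definition hd (k o : nat) (p : P) := ((k < o)%N -> p = 0) /\ p \is (k - o)%N.-homog.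

Lemma hd0 k o : hd k o 0.
Proof. by split => //; apply: dhomog0. Qed.
Lemma hdD k o p q : hd k o p -> hd k o q -> hd k o (p + q).
Proof.
move=> [Hp1 Hp2] [Hq1 Hq2]; split; first by move=> H; rewrite Hp1 // Hq1 // addr0.
exact: rpredD.
Qed.
Lemma hdN k o p : hd k o p -> hd k o (- p).
Proof. by move=> [H1 H2]; split; [move=> H; rewrite H1 // oppr0 | rewrite -scaleN1r; apply: dhomogZ]. Qed.
Lemma hdB k o p q : hd k o p -> hd k o q -> hd k o (p - q).
Proof. by move=> Hp Hq; apply: hdD => //; apply: hdN. Qed.
Lemma hd_mulh k o j p h : h \is j.-homog -> hd k (o + j) p -> hd k o (h * p).
Proof.
move=> Hh [H1 H2]; split.
  by move=> H; rewrite H1 ?mulr0 // ltn_addr.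
have [Hk|Hk] := ltnP k (o + j).
  by rewrite H1 // mulr0 dhomog0.
have -> : (k - o = j + (k - (o + j)))%N.
  by rewrite subnDA addnC subnK // leq_subRL ?(leq_trans (leq_addr _ _) Hk) // addnC.
exact: dhomogM.
Qed.
Lemma hd_mulk k o j p h : h \is j.-homog -> hd k o p -> hd (k + j) o (h * p).
Proof.
move=> Hh [H1 H2]; split.
  by move=> H; rewrite H1 ?mulr0 // (leq_ltn_trans (leq_addr j k) H).
have [Hk|Hk] := ltnP k o.
  by rewrite H1 // mulr0 dhomog0.
have -> : (k + j - o = j + (k - o))%N by rewrite addnC addnBA.
exact: dhomogM.
Qed.
Lemma hd_Dq i j k o w : i != j -> hd k o w -> hd k o.+1 (Dq i j w).
Proof.
move=> ij [H1 H2].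
have [Hk|Hk] := ltnP k o.
  by rewrite H1 // Dq0 //; apply: hd0.
have [Hz Hh] := Dq_homog ij H2.
split; last by rewrite subnS.
move=> H; apply: Hz; apply/eqP; rewrite subn_eq0.
by rewrite -ltnS.
Qed.

End H1.


Section H2.
Variable R : realType.
Local Notation P := (P R).
Implicit Types (w p q s g u v h r : P) (x y : Mel R) (z : Nel R).

Lemma hd_Qd k o w : hd k o w -> hd k o.+1 (Qd w).
Proof. exact: hd_Dq. Qed.
Lemma hd_D1 k o w : hd k o w -> hd k o.+1 (D1 w).
Proof. exact: hd_Dq. Qed.
Lemma X1h : (X1 : P) \is 1.-homog. Proof. exact: Xi_homog. Qed.
Lemma X2h : (X2 : P) \is 1.-homog. Proof. exact: Xi_homog. Qed.
Lemma X3h : (X3 : P) \is 1.-homog. Proof. exact: Xi_homog. Qed.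
Lemma S1h : (S1 : P) \is 1.-homog.
Proof. by rewrite S1E; apply: rpredD; [apply: rpredD|]; apply: Xi_homog. Qed.
Lemma S2h : (S2 : P) \is 2.-homog.
Proof.
by rewrite S2E; apply: rpredD; [apply: rpredD|]; apply: (dhomogM (d := 1%N) (e := 1%N));
  apply: Xi_homog.
Qed.
Lemma S12h : (S1 ^+ 2 - S2 : P) \is 2.-homog.
Proof.
apply: rpredB; last exact: S2h.
by rewrite expr2; apply: (dhomogM (d := 1%N) (e := 1%N)); apply: S1h.
Qed.

Lemma hd_Pp k w : hd k 0 w -> hd k 0 (Pp w).
Proof.
move=> Hw; rewrite PpE; apply: hdB => //.
apply: (hd_mulh (j := 1%N) X2h); exact: hd_Qd.
Qed.

Lemma hd_cc N u v : hd N 0 u -> hd N 1 v ->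
  [/\ hd N 0 (cc0 u v), hd N 1 (cc1 u v), hd N 2 (cc2 u v) & hd N 1 (cch u v)].
Proof.
move=> Hu Hv.
have Du := hd_D1 Hu. have Dv := hd_D1 Hv.
have h2 : hd N 2 (cc2 u v) by rewrite cc2E.
have h1 : hd N 1 (cc1 u v).
  rewrite cc1E; apply: hdB; first exact: hdN.
  exact: (hd_mulh (j := 1%N) S1h).
have L1v : hd N 1 (L1 v).
  rewrite L1E; apply: hdB => //; exact: (hd_mulh (j := 1%N) X1h).
have hh : hd N 1 (cch u v) by rewrite cchE; apply: hdB.
split=> //.
rewrite cc0E L1E; apply: hdB; [apply: hdB; [apply: hdB|] | ].
- apply: hdB => //; exact: (hd_mulh (j := 1%N) X1h).
- exact: (hd_mulh (j := 1%N) S1h).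
- exact: (hd_mulh (j := 2%N) S12h).
- exact: (hd_mulh (j := 1%N) X3h).
Qed.

Lemma homdeg0P d p : homdeg 0 d p -> p = 0 \/ (exists e, d = (2 * e)%N /\ p \is e.-homog).
Proof. by case=> [->|[e [-> He]]]; [left | right; exists e; rewrite addn0]. Qed.

Lemma term_hom d (t : P * P * P) :
  (exists d1 d2 d3, d = (d1 + d2 + d3)%N /\
    [/\ homdeg 0 d1 t.1.1, homdeg 0 d2 t.1.2 & homdeg 0 d3 t.2]) ->
  (t.1.1 * Pp (t.1.2 * t.2) = 0 /\ t.1.1 * Qd (t.1.2 * t.2) = 0) \/
  [/\ ~~ odd d, hd d./2 0 (t.1.1 * Pp (t.1.2 * t.2)) & hd d./2 1 (t.1.1 * Qd (t.1.2 * t.2))].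
Proof.
case=> d1 [d2 [d3 [-> [/homdeg0P H1 /homdeg0P H2 /homdeg0P H3]]]].
case: H1 => [->|[e1 [-> He1]]]; first by left; rewrite !mul0r.
case: H2 => [->|[e2 [-> He2]]]; first by left; rewrite !mul0r Pp0 Qd0 mulr0.
case: H3 => [->|[e3 [-> He3]]]; first by left; rewrite !mulr0 Pp0 Qd0 mulr0.
right.
have -> : (2 * e1 + 2 * e2 + 2 * e3)%N = (2 * (e1 + e2 + e3))%N by rewrite !mulnDr.
rewrite mul2n odd_double doubleK.
have Hw : hd (e2 + e3) 0 (t.1.2 * t.2).
  by split => //; rewrite subn0; apply: dhomogM.
have -> : (e1 + e2 + e3 = e2 + e3 + e1)%N by rewrite -addnA addnC.
split=> //.
- exact: hd_mulk He1 (hd_Pp Hw).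
- exact: hd_mulk He1 (hd_Qd Hw).
Qed.

End H2.


Section F.
Variable R : realType.
Local Notation P := (P R).
Implicit Types (w p q s g u v h r : P) (x y : Mel R) (z : Nel R).
Local Notation X3h := (@X3h R). Local Notation X2h := (@X2h R).

Lemma UV_hom d y : Mhomrep d y ->
  [/\ (odd d -> U y = 0 /\ V y = 0), hd d./2 0 (U y) & hd d./2 1 (V y)].
Proof.
elim: y => [|t y IH] H.
  by rewrite /U /V !big_nil; split => //; apply: hd0.
have Ht := H t (mem_head _ _).
have H' : Mhomrep d y by move=> t' Ht'; apply: H; rewrite in_cons Ht' orbT.
have [IH1 IH2 IH3] := IH H'.
rewrite /U /V !big_cons -/(U y) -/(V y).
case: (term_hom Ht) => [[-> ->]|[Hodd h1 h2]].
  by rewrite !add0r; split.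
split; [by rewrite (negbTE Hodd) | exact: hdD | exact: hdD].
Qed.

Definition zfil z : Nel R := (filter (fun t => t.1 != 0) z.1, z.2).

Lemma sum_fil (l : seq (P * P)) (F : P -> P) :
  \sum_(t <- filter (fun t => t.1 != 0) l) t.1 * F t.2 = \sum_(t <- l) t.1 * F t.2.
Proof.
rewrite big_filter big_rmcond // => t; rewrite negbK => /eqP ->; exact: mul0r.
Qed.

Lemma UV_zfil z : U (psi (zfil z)) = U (psi z) /\ V (psi (zfil z)) = V (psi z).
Proof. by rewrite !UpE !VpE /zfil /= !sum_fil. Qed.

Lemma Nvalid_zfil z : Nvalid z -> Nvalid (zfil z).
Proof. by case=> H1 H2; split => // t; rewrite mem_filter => /andP [_ /H1]. Qed.

Lemma X3k_homog k : (X3 ^+ k : P) \is k.-homog.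
Proof.
elim: k => [|k IH]; first by rewrite expr0; apply: dhomog1.
by rewrite exprS; exact: (dhomogM X3h IH).
Qed.

Lemma pair_hom N k (c : P) : (k <= N)%N -> c \is (N - k).-homog ->
  exists d1 d2, N.*2 = (d1 + d2)%N /\ homdeg 0 d1 c /\ homdeg 0 d2 (X3 ^+ k : P).
Proof.
move=> Hk Hc; exists (2 * (N - k))%N, (2 * k)%N; split.
  by rewrite -mulnDr subnK // mul2n.
split; right; [exists (N - k)%N | exists k]; rewrite addn0; split => //.
exact: X3k_homog.
Qed.

Lemma Nhomrep_phi d y : Mhomrep d y -> Nhomrep d (zfil (phi y)).
Proof.
move=> Hy; have [Hodd hU hV] := UV_hom Hy.
case: (boolP (odd d)) => Hd.
  have [e1 e2] := Hodd Hd.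
  have [c0 c1 c2 ch] := @cc00 R.
  rewrite /zfil /phi /= e1 e2 c0 c1 c2 ch eqxx /=; split => //; by left.
have Ed : d = (d./2).*2 by rewrite -{1}(odd_double_half d) (negbTE Hd).
have [h0 h1 h2 hh] := hd_cc hU hV.
split.
  move=> t; rewrite mem_filter /phi /= !inE => /andP [Ht].
  move=> /or3P [] /eqP Et; rewrite Et /= in Ht *.
  - case: h0 => _ H0; have := pair_hom (k := 0) (leq0n _) H0.
    by rewrite -Ed expr0.
  - case: h1 => Z1 H1.
    have Hk : (1 <= d./2)%N by rewrite leqNgt; apply/negP => /Z1 E; rewrite E eqxx in Ht.
    by have := pair_hom Hk H1; rewrite -Ed expr1.
  - case: h2 => Z2 H2.
    have Hk : (2 <= d./2)%N by rewrite leqNgt; apply/negP => /Z2 E; rewrite E eqxx in Ht.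
    by have := pair_hom Hk H2; rewrite -Ed.
case: hh => Zh Hh; rewrite /zfil /phi /=.
case: (eqVneq (cch (U y) (V y)) 0) => [->|Hne]; first by left.
have Hk : (1 <= d./2)%N by rewrite leqNgt; apply/negP => /Zh E; rewrite E eqxx in Hne.
right; exists (d./2 - 1)%N; split => //.
by rewrite {1}Ed -mul2n -{1}(subnK Hk) mulnDr muln1.
Qed.

Definition psi0 z : Mel R := filter (fun t => t.1.1 != 0) (psi z).

Lemma UV_psi0 z : U (psi0 z) = U (psi z) /\ V (psi0 z) = V (psi z).
Proof.
rewrite /U /V /psi0 !big_filter.
by split; rewrite big_rmcond // => t; rewrite negbK => /eqP ->; rewrite mul0r.
Qed.

Lemma Mvalid_psi0 z : Nvalid z -> Mvalid (psi0 z).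
Proof.
move=> Hz t; rewrite mem_filter => /andP [_ Ht].
exact: (Mvalid_psi Hz).
Qed.

Lemma Mhomrep_psi0 d z : Nhomrep d z -> Mhomrep d (psi0 z).
Proof.
case=> H1 H2 t; rewrite mem_filter => /andP [Ht].
rewrite /psi mem_cat => /orP [/mapP [t' Ht' Et]|].
  have [d1 [d2 [Ed [Hd1 Hd2]]]] := H1 t' Ht'.
  exists d1, 0%N, d2; rewrite Et /=; split; first by rewrite addn0.
  split => //; right; exists 0%N; split => //; exact: dhomog1.
rewrite !inE => /orP [] /eqP Et; rewrite Et /= in Ht *.
- case: H2 => [E|[e [Ed He]]]; first by rewrite E mul0r eqxx in Ht.
  exists (2 * e.+1)%N, 0%N, 0%N; split; first by rewrite Ed !addn0 mulnS addnC.
  split.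
  + right; exists e.+1; split; first by rewrite addn0.
    rewrite -[X in X.-homog]addn1; exact: (dhomogM He X3h).
  + by right; exists 0%N; split => //; exact: dhomog1.
  + by right; exists 0%N; split => //; exact: dhomog1.
- case: H2 => [E|[e [Ed He]]]; first by rewrite E oppr0 eqxx in Ht.
  exists (2 * e)%N, 2%N, 0%N; split; first by rewrite Ed addn0.
  split.
  + right; exists e; split; first by rewrite addn0.
    by rewrite -scaleN1r; apply: dhomogZ.
  + by right; exists 1%N; split => //; exact: X2h.
  + by right; exists 0%N; split => //; exact: dhomog1.
Qed.

End F.

Theorem lemma3p4 (R : realType) :
  exists phi : Mel R -> Nel R, graded_bimod_iso_MN phi.
Proof.
exists (@phi R).
have Ueq : forall x y : Mel R, U x = U y -> V x = V y -> phi x = phi y.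
  by move=> x y HU HV; rewrite /phi HU HV.
split.
  move=> x _; exact: phi_valid.
split.
  move=> x y _ _ /Meq_UV [HU HV]; rewrite (Ueq _ _ HU HV); exact: Neq_refl.
split.
  move=> x y Hx Hy.
  apply: UpVp_Neq; [exact: phi_valid | apply: Nvalid_add; exact: phi_valid | |].
  - have [a _] := Uphi (Madd x y); have [b _] := Up_add (phi x) (phi y).
    have [c _] := Uphi x; have [d _] := Uphi y; have [e _] := UV_add x y.
    by rewrite a b c d e.
  - have [_ a] := Uphi (Madd x y); have [_ b] := Up_add (phi x) (phi y).
    have [_ c] := Uphi x; have [_ d] := Uphi y; have [_ e] := UV_add x y.
    by rewrite a b c d e.
split.
  move=> c x Hx.
  apply: UpVp_Neq; [exact: phi_valid | apply: Nvalid_scale; exact: phi_valid | |].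
  - have [a _] := Uphi (Mscale c x); have [b _] := Up_scale c (phi x).
    have [d _] := Uphi x; have [e _] := UV_scale c x.
    by rewrite a b d e.
  - have [_ a] := Uphi (Mscale c x); have [_ b] := Up_scale c (phi x).
    have [_ d] := Uphi x; have [_ e] := UV_scale c x.
    by rewrite a b d e.
split.
  move=> r x Hr Hx.
  apply: UpVp_Neq; [exact: phi_valid | apply: Nvalid_lact => //; exact: phi_valid | |].
  - have [a _] := Uphi (Mlact r x); have [b _] := Up_lact r (phi x).
    have [d _] := Uphi x; have [e _] := UV_lact r x.
    by rewrite a b d e.
  - have [_ a] := Uphi (Mlact r x); have [_ b] := Up_lact r (phi x).
    have [_ d] := Uphi x; have [_ e] := UV_lact r x.
    by rewrite a b d e.
split.
  move=> r x Hr Hx.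
  apply: UpVp_Neq; [exact: phi_valid | apply: Nvalid_ract => //; exact: phi_valid | |].
  - have [a _] := Uphi (Mract x r); have [b _] := Up_ract r (phi x).
    have [d d'] := Uphi x; have [e _] := UV_ract r x.
    by rewrite a b d d' e.
  - have [_ a] := Uphi (Mract x r); have [_ b] := Up_ract r (phi x).
    have [d d'] := Uphi x; have [_ e] := UV_ract r x.
    by rewrite a b d d' e.
split.
  move=> x y Hx Hy /Neq_UpVp [HU HV].
  have [a a'] := Uphi x; have [b b'] := Uphi y.
  apply: UV_Meq => //; [by rewrite -a -b HU | by rewrite -a' -b' HV].
split.
  move=> z Hz; exists (psi z); split; first exact: Mvalid_psi.
  apply: UpVp_Neq => //; first exact: phi_valid.
  - by have [a _] := Uphi (psi z).
  - by have [_ a] := Uphi (psi z).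
move=> d x Hx; split.
- case=> y [Hy Hxy Hyd].
  exists (zfil (phi y)); split.
  + apply: Nvalid_zfil; exact: phi_valid.
  + apply: UpVp_Neq; [exact: phi_valid | apply: Nvalid_zfil; exact: phi_valid | |].
    * have [a _] := Uphi x; have [b _] := UV_zfil (phi y); have [c _] := Uphi y.
      have [e _] := Meq_UV Hxy.
      by rewrite a b c e.
    * have [_ a] := Uphi x; have [_ b] := UV_zfil (phi y); have [_ c] := Uphi y.
      have [_ e] := Meq_UV Hxy.
      by rewrite a b c e.
  + exact: Nhomrep_phi.
- case=> z [Hz Hxz Hzd].
  exists (psi0 z); split.
  + exact: Mvalid_psi0.
  + have [a a'] := Uphi x; have [b b'] := UV_psi0 z.
    have [e e'] := Neq_UpVp Hxz.
    apply: UV_Meq => //; first exact: Mvalid_psi0.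
    * by rewrite b -e a.
    * by rewrite b' -e' a'.
  + exact: Mhomrep_psi0.
Qed.
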